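(* Let $\mathcal{T}$ be a tangle of order $k$ in a connectivity system $(E,\lambda)$. Let $n\geq 4$, and let $\Phi=(P_1,\ldots,P_n)$ be a $\mathcal{T}$-strong partition of $E$. If $P_i\cup P_{i+1}$ is $k$-separating for each $i\in \{1,\dots,n-1\}$, then $\Phi$ is a $k$-flower in $\mathcal{T}$.
   Context: A connectivity system is a pair $(E,\lambda)$ with $E$ finite and $\lambda$ an integer-valued symmetric ($\lambda(X)=\lambda(E-X)$) submodular function on subsets of $E$. $X$ is $k$-separating if $\lambda(X)\le k$. A tangle of order $k$ is a collection $\mathcal T$ of subsets of $E$ with (T1) $\lambda(A)<k$ for $A\in\mathcal T$; (T2) if $\lambda(A)\le k-1$ then $A\in\mathcal T$ or $E-A\in\mathcal T$; (T3) $A\cup B\cup C\ne E$ for $A,B,C\in\mathcal T$; (T4) $E-\{e\}\notin\mathcal T$ for $e\in E$. A set is $\mathcal T$-weak if contained in a member of $\mathcal T$, and $\mathcal T$-strong otherwise; a partition is $\mathcal T$-strong if all its parts are. A $k$-flower in $\mathcal T$ is a $\mathcal T$-strong partition $(P_1,\dots,P_n)$ of $E$ such that for every $i$, both $P_i$ and $P_i\cup P_{i+1}$ are $k$-separating, subscripts taken modulo $n$. *)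

(* Defs.v *)
From mathcomp Require Import all_boot all_order all_algebra.
Set Implicit Arguments. Unset Strict Implicit. Unset Printing Implicit Defensive.
Import Order.TTheory GRing.Theory Num.Theory.
Local Open Scope ring_scope.

Definition symmetric_fn (E : finType) (lam : {set E} -> int) : Prop :=
  forall X : {set E}, lam X = lam (~: X).

Definition submodular_fn (E : finType) (lam : {set E} -> int) : Prop :=
  forall X Y : {set E}, lam (X :|: Y) + lam (X :&: Y) <= lam X + lam Y.

Definition connectivity_system (E : finType) (lam : {set E} -> int) : Prop :=
  symmetric_fn lam /\ submodular_fn lam.

Definition k_separating (E : finType) (lam : {set E} -> int) (k : int)
  (X : {set E}) : Prop := lam X <= k.

Definition is_tangle (E : finType) (lam : {set E} -> int) (k : int)
  (T : {set {set E}}) : Prop :=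
  [/\ (forall A, A \in T -> lam A < k),
      (forall A, lam A <= k - 1 -> A \in T \/ ~: A \in T),
      (forall A B C, A \in T -> B \in T -> C \in T -> A :|: B :|: C != setT)
    & (forall e : E, ~: [set e] \notin T)].

Definition T_weak (E : finType) (T : {set {set E}}) (X : {set E}) : Prop :=
  exists2 A, A \in T & X \subset A.

Definition T_strong (E : finType) (T : {set {set E}}) (X : {set E}) : Prop :=
  ~ T_weak T X.

Definition is_partition (E : finType) (n : nat) (P : 'I_n -> {set E}) : Prop :=
  (forall i j : 'I_n, i != j -> [disjoint P i & P j]) /\
  \bigcup_(i < n) P i = setT.

Definition T_strong_partition (E : finType) (T : {set {set E}}) (n : nat)
  (P : 'I_n -> {set E}) : Prop :=
  is_partition P /\ forall i, T_strong T (P i).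

(* k-flower in T; subscripts mod n via ordS (i.+1 mod n). *)
Definition k_flower (E : finType) (lam : {set E} -> int) (k : int)
  (T : {set {set E}}) (n : nat) (P : 'I_n -> {set E}) : Prop :=
  T_strong_partition T P /\
  forall i : 'I_n, k_separating lam k (P i) /\
                   k_separating lam k (P i :|: P (ordS i)).

(* Main.v *)
Require Import Defs.
From mathcomp Require Import all_boot all_order all_algebra.
From mathcomp Require Import zify.
Import Order.TTheory GRing.Theory Num.Theory.

Theorem lemma4p2 (E : finType) (lam : {set E} -> int) (k : int)
  (T : {set {set E}}) (n : nat) (P : 'I_n -> {set E}) :
  connectivity_system lam ->
  is_tangle lam k T ->
  (4 <= n)%N ->
  T_strong_partition T P ->
  (forall i : 'I_n, (i.+1 < n)%N -> k_separating lam k (P i :|: P (ordS i))) ->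
  k_flower lam k T P.
Proof.
move=> [Hsym Hsub] [T1 T2 T3 T4] n4 [[Hdis Hcov] Hstr] Hpair.
have inP : forall x (i j : 'I_n), x \in P j -> (x \in P i) = (j == i).
  move=> x i j xj; case: eqP => [<-|/eqP ne]; first by rewrite xj.
  apply/negbTE/negP => xi; have := Hdis _ _ ne.
  rewrite disjoint_subset => /subsetP/(_ x xj).
  by rewrite inE xi.
have exP : forall x, exists j : 'I_n, x \in P j.
  move=> x; have : x \in \bigcup_(i < n) P i by rewrite Hcov inE.
  by case/bigcupP => j _ xj; exists j.
pose S (c : pred nat) := [set x | [exists i : 'I_n, c i && (x \in P i)]].
have memS : forall c x (j : 'I_n), x \in P j -> (x \in S c) = c j.
  move=> c x j xj; rewrite inE; apply/existsP/idP => [[i /andP[ci xi]]|cj].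
    by rewrite (inP x i j xj) in xi; move/eqP: xi => ->.
  by exists j; rewrite cj xj.
have eqS : forall c d : pred nat, (forall j : 'I_n, c j = d j) -> S c = S d.
  by move=> c d cd; apply/setP => x; have [j xj] := exP x; rewrite !(memS _ x j xj).
have PS : forall i : 'I_n, P i = S (pred1 (i:nat)).
  move=> i; apply/setP => x; have [j xj] := exP x.
  by rewrite (memS _ x j xj) (inP x i j xj).
have SC : forall c : pred nat, ~: S c = S (predC c).
  by move=> c; apply/setP=> x; have [j xj] := exP x; rewrite inE !(memS _ x j xj).
have SU : forall c d : pred nat, S c :|: S d = S [pred i | c i || d i].
  by move=> c d; apply/setP=> x; have [j xj] := exP x; rewrite inE !(memS _ x j xj).
have SI : forall c d : pred nat, S c :&: S d = S [pred i | c i && d i].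
  by move=> c d; apply/setP=> x; have [j xj] := exP x; rewrite inE !(memS _ x j xj).
have weakT : forall X Y : {set E}, X \subset Y -> Y \in T -> ~ T_strong T X.
  by move=> X Y XY YT; apply; exists Y.
have G : forall (c : pred nat) (a b : nat), (a < n)%N -> (b < n)%N -> c a -> ~~ c b -> (k <= lam (S c))%R.
  move=> c a b an bn ca cb; rewrite leNgt; apply/negP => lt.
  have : (lam (S c) <= k - 1)%R by lia.
  case/T2 => [ST|SCT].
    apply: (weakT (P (Ordinal an)) (S c)) ST (Hstr _).
    by apply/subsetP => x xa; rewrite (memS _ x _ xa).
  apply: (weakT (P (Ordinal bn)) (~: S c)) SCT (Hstr _).
  by apply/subsetP => x xa; rewrite SC (memS _ x _ xa) /= cb.
pose I (a b : nat) := [pred i : nat | a <= i <= b].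
have base : forall b, (b.+1 < n)%N -> (lam (S (I b b.+1)) <= k)%R.
  move=> b bn; have bn' : (b < n)%N by lia.
  have := Hpair (Ordinal bn') bn.
  suff -> : S (I b b.+1) = P (Ordinal bn') :|: P (ordS (Ordinal bn')) by [].
  rewrite !PS SU; apply: eqS => j /=; rewrite modn_small //; lia.
have interval : forall m a, (a + m.+1 < n)%N -> (lam (S (I a (a + m.+1)%N)) <= k)%R.
  elim => [|m IH] a h.
- by rewrite addn1; apply: base; lia.
- have h1 := IH a ltac:(lia).
  have h2 := base (a + m.+1) ltac:(lia).
  have h3 := Hsub (S (I a (a + m.+1))) (S (I (a + m.+1) (a + m.+1).+1)).
  have e1 : S (I a (a + m.+1)) :|: S (I (a + m.+1) (a + m.+1).+1) = S (I a (a + m.+2)).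
    by rewrite SU; apply: eqS => j; rewrite /I /=; lia.
  have e2 : S (I a (a + m.+1)) :&: S (I (a + m.+1) (a + m.+1).+1) = S (pred1 (a + m.+1)).
    by rewrite SI; apply: eqS => j; rewrite /I /=; lia.
  rewrite e1 e2 in h3.
  have h4 := G (pred1 (a + m.+1)) (a + m.+1) a ltac:(lia) ltac:(lia) ltac:(by rewrite /= eqxx) ltac:(rewrite /=; lia).
  move: h1 h2 h3 h4; set u1 := lam (S (I a (a + m.+2))); set u2 := lam (S (pred1 (a + m.+1))); set u3 := lam (S (I a (a + m.+1))); set u4 := lam (S (I (a + m.+1) (a + m.+1).+1)); clearbody u1 u2 u3 u4; lia.
split; first by split.
move=> i; rewrite /k_separating.
have hi := ltn_ord i.
have hP : forall j : 'I_n, (lam (P j) <= k)%R.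
  move=> j; have hj := ltn_ord j.
  have [j0|jn0] := eqVneq (j : nat) 0%N.
    rewrite Hsym PS SC (eqS _ (I 1 (1 + (n - 3).+1)%N)); last first.
      by move=> l; rewrite /I /=; have := ltn_ord l; lia.
    by apply: interval; lia.
  have [jl|jnl] := eqVneq (j : nat) n.-1.
    rewrite Hsym PS SC (eqS _ (I 0 (0 + (n - 3).+1)%N)); last first.
      by move=> l; rewrite /I /=; have := ltn_ord l; lia.
    by apply: interval; lia.
  have h1 := base j.-1 ltac:(lia).
  have h2 := base j ltac:(lia).
  have e0 : S (I j.-1 j.-1.+1) = S (I j.-1 j) by apply: eqS => l; rewrite /I /=; lia.
  rewrite e0 in h1.
  have h3 := Hsub (S (I j.-1 j)) (S (I j j.+1)).
  have e1 : S (I j.-1 j) :|: S (I j j.+1) = S (I j.-1 j.+1).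
    by rewrite SU; apply: eqS => l; rewrite /I /=; lia.
  have e2 : S (I j.-1 j) :&: S (I j j.+1) = P j.
    by rewrite SI PS; apply: eqS => l; rewrite /I /=; lia.
  rewrite e1 e2 in h3.
  have h4 := G (I j.-1 j.+1) j (if (2 <= j)%N then 0%N else n.-1) hj
     ltac:(case: ifP; lia) ltac:(rewrite /I /=; lia) ltac:(rewrite /I /=; case: ifP; lia).
  move: h1 h2 h3 h4; set u1 := lam (S (I j.-1 j)); set u2 := lam (S (I j j.+1));
    set u3 := lam (S (I j.-1 j.+1)); set u4 := lam (P j); clearbody u1 u2 u3 u4; lia.
split; first exact: hP.
have [hin|hin] := ltnP i.+1 n; first exact: Hpair.
have -> : P i :|: P (ordS i) = ~: S (I 1 (1 + (n - 4).+1)%N).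
  rewrite !PS SU SC; apply: eqS => l /=; rewrite /I /=.
  have := ltn_ord l; have -> : (i.+1 %% n = 0)%N.
    by rewrite (_ : i.+1 = n); [rewrite modnn | lia].
  lia.
by rewrite -Hsym; apply: interval; lia.
Qed.
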